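(* Let $m=2^\alpha\beta$ be a positive integer with $\beta$ odd. Then, as operators on meromorphic functions on the upper half-plane invariant under $\Gamma_0(2)^+$, $$\tilde{\mathbf{T}}_m=\sum_{\substack{r^2\mid m\\ r\ \text{odd}}}\ \sum_{i=0}^{\alpha}\mathbf{T}_{m/(r^22^i)},$$ where the outer sum is over positive odd integers $r$ with $r^2\mid m$.
   Context: Matrices act on the upper half-plane by Möbius transformations. $\Gamma_0(2)$ is the group of integer matrices $\begin{bmatrix}a&b\\c&d\end{bmatrix}$ of determinant $1$ with $c$ even, $w_2=2^{-1/2}\begin{bmatrix}0&-1\\2&0\end{bmatrix}$, and $\Gamma_0(2)^+$ is generated by $\Gamma_0(2)$ and $w_2$. For a positive integer $n$ define $M^n=M_1^n\cup S_1^n\cup S_2^n$ with $M_1^n=\{\begin{bmatrix}x&y\\0&z\end{bmatrix}: x,y,z\in\mathbb{Z},\ xz=n,\ 0\leq y<z,\ \gcd(x,y,z)=1,\ x\text{ odd}\}$, $S_1^n=\{\begin{bmatrix}x&y\\0&z\end{bmatrix}: xz=n,\ 0\leq y<z,\ \gcd(x,y,z)=1,\ z\text{ odd}\}$, $S_2^n=\{2^{-1/2}\begin{bmatrix}x&y\\0&z\end{bmatrix}: xz=2n,\ 0\leq y<z,\ \gcd(x,y,z)=1,\ x,z\text{ even}\}$ (all with $x,z>0$). Operators: $\mathbf{T}_nf(\tau)=\sum_{\gamma\in M^n}f(\gamma\tau)$, and $\tilde{\mathbf{T}}_nf(\tau)=\sum_{xz=n,\,0\leq y<z}f\big(\frac{x\tau+y}{z}\big)$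 if $n$ is odd, while for $n$ even $\tilde{\mathbf{T}}_nf(\tau)=\sum_{xz=n,\,0\leq y<z}f\big(\frac{x\tau+y}{z}\big)+\sum_{xz=2n,\ x,z\text{ even},\ 0\leq y<z}f\big(\frac{x\tau+y}{z}\big)$, sums over integers $x,z>0$, $y$. *)

(* Defs.v *)
From HB Require Import structures.
From mathcomp Require Import all_boot all_order all_algebra.
From mathcomp Require Import reals.
From mathcomp.real_closed Require Import complex.
Set Implicit Arguments. Unset Strict Implicit. Unset Printing Implicit Defensive.
Import Order.TTheory GRing.Theory Num.Theory.
Local Open Scope ring_scope.

Section Defs.
Variable R : realType.
Local Notation C := R[i].

Definition toC (r : R) : C := Complex r 0.

Definition upper (t : C) : Prop := 0 < complex.Im t.

Definition mx22 (a b c d : R) : 'M[R]_2 :=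
  \matrix_(i < 2, j < 2)
    if val i == 0%N then (if val j == 0%N then a else b)
    else (if val j == 0%N then c else d).

Definition mobius (g : 'M[R]_2) (t : C) : C :=
  (toC (g 0 0) * t + toC (g 0 1)) / (toC (g 1 0) * t + toC (g 1 1)).

Definition is_int (r : R) : Prop := exists z : int, r = z%:~R.

Definition Gamma0_2 (g : 'M[R]_2) : Prop :=
  [/\ forall i j, is_int (g i j), \det g = 1 & exists k : int, g 1 0 = (2 * k)%:~R].

Definition w2 : 'M[R]_2 := (Num.sqrt 2)^-1 *: mx22 0 (-1) 2 0.

Inductive Gamma0_2plus : 'M[R]_2 -> Prop :=
| G2p_base g : Gamma0_2 g -> Gamma0_2plus g
| G2p_w2 : Gamma0_2plus w2
| G2p_mul g h : Gamma0_2plus g -> Gamma0_2plus h -> Gamma0_2plus (g *m h)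
| G2p_inv g : Gamma0_2plus g -> Gamma0_2plus (invmx g).

Definition G2p_invariant (f : C -> C) : Prop :=
  forall g, Gamma0_2plus g -> forall t, upper t -> f (mobius g t) = f t.

Definition triples (N : nat) : seq (nat * nat * nat) :=
  flatten [seq flatten [seq [seq (x, y, z) | y <- iota 0 z] | z <- iota 1 N]
          | x <- iota 1 N].

Definition gcd3 (x y z : nat) : nat := gcdn (gcdn x y) z.

Definition M1 (n : nat) : seq 'M[R]_2 :=
  [seq mx22 p.1.1%:R p.1.2%:R 0 p.2%:R | p <- triples n &
     [&& p.1.1 * p.2 == n, p.1.2 < p.2, gcd3 p.1.1 p.1.2 p.2 == 1 & odd p.1.1]]%N.

Definition S1 (n : nat) : seq 'M[R]_2 :=
  [seq mx22 p.1.1%:R p.1.2%:R 0 p.2%:R | p <- triples n &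
     [&& p.1.1 * p.2 == n, p.1.2 < p.2, gcd3 p.1.1 p.1.2 p.2 == 1 & odd p.2]]%N.

Definition S2 (n : nat) : seq 'M[R]_2 :=
  [seq (Num.sqrt 2)^-1 *: mx22 p.1.1%:R p.1.2%:R 0 p.2%:R | p <- triples (2 * n) &
     [&& p.1.1 * p.2 == 2 * n, p.1.2 < p.2, gcd3 p.1.1 p.1.2 p.2 == 1,
         ~~ odd p.1.1 & ~~ odd p.2]]%N.

Definition Mset (n : nat) : seq 'M[R]_2 := undup (M1 n ++ S1 n ++ S2 n).

Definition Top (n : nat) (f : C -> C) (t : C) : C :=
  \sum_(g <- Mset n) f (mobius g t).

Definition evxyz (f : C -> C) (t : C) (p : nat * nat * nat) : C :=
  f ((toC p.1.1%:R * t + toC p.1.2%:R) / toC p.2%:R).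

Definition Ttilde (n : nat) (f : C -> C) (t : C) : C :=
  \sum_(p <- triples n | (p.1.1 * p.2 == n)%N) evxyz f t p
  + (if odd n then 0
     else \sum_(p <- triples (2 * n) |
                [&& p.1.1 * p.2 == 2 * n, ~~ odd p.1.1 & ~~ odd p.2]%N) evxyz f t p).

End Defs.

(* Main.v *)
Require Import Defs.
From HB Require Import structures.
From mathcomp Require Import all_boot all_order all_algebra.
From mathcomp Require Import reals.
From mathcomp.real_closed Require Import complex.
Import Order.TTheory GRing.Theory Num.Theory.
Local Open Scope ring_scope.

From mathcomp Require Import zify ring.
Local Close Scope ring_scope.

Lemma uniq_flatten_map (S T : eqType) (s : seq S) (F : S -> seq T) (k : T -> S) :
  uniq s -> (forall i, uniq (F i)) -> (forall i a, a \in F i -> k a = i) ->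
  uniq (flatten (map F s)).
Proof.
move=> us uF kF; elim: s us => [|i s IH] //= /andP[nis us].
rewrite cat_uniq uF IH // andbT; apply/hasPn => a /flattenP[l /mapP[j js ->]] aj.
apply/negP => ai; move: (kF _ _ ai) (kF _ _ aj) => -> ej.
by move: nis; rewrite ej js.
Qed.

Lemma mem_triples N x y z :
  ((x, y, z) \in triples N) = [&& 0 < x <= N, 0 < z <= N & y < z].
Proof.
apply/flattenP/idP.
  move=> [l /mapP[x' x'N ->]] /flattenP[l' /mapP[z' z'N ->]] /mapP[y' y'z [-> -> ->]].
  move: x'N z'N y'z; rewrite !mem_iota; lia.
move=> H; exists (flatten [seq [seq (x, y0, z0) | y0 <- iota 0 z0] | z0 <- iota 1 N]).
  apply/mapP; exists x => //; rewrite mem_iota; lia.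
apply/flattenP; exists [seq (x, y0, z) | y0 <- iota 0 z].
  apply/mapP; exists z => //; rewrite mem_iota; lia.
apply/mapP; exists y => //; rewrite mem_iota; lia.
Qed.

Lemma uniq_triples N : uniq (triples N).
Proof.
apply: (@uniq_flatten_map _ _ _ _ (fun p : nat * nat * nat => p.1.1)); first exact: iota_uniq.
  move=> x; apply: (@uniq_flatten_map _ _ _ _ (fun p : nat * nat * nat => p.2)); first exact: iota_uniq.
    move=> z; rewrite map_inj_uniq ?iota_uniq //; by move=> a b [->].
  by move=> z0 a /mapP[y _ ->].
by move=> x a /flattenP[l /mapP[z _ ->]] /mapP[y _ ->].
Qed.

Lemma mem_triplesP N p :
  (p \in triples N) = [&& 0 < p.1.1 <= N, 0 < p.2 <= N & p.1.2 < p.2].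
Proof. by case: p => [[x y] z]; rewrite mem_triples. Qed.


Lemma sum_pred1_nat (V : zmodType) a L (X : V) :
  0 < a <= L -> (\sum_(1 <= d < L.+1 | a == d) X = X)%R.
Proof.
move=> H; rewrite -big_filter.
have -> : [seq d <- index_iota 1 L.+1 | a == d] = [:: a].
  rewrite (eq_filter (a2 := pred1 a)); last by move=> d /=; rewrite eq_sym.
  by rewrite filter_pred1_uniq // ?iota_uniq // mem_index_iota; lia.
by rewrite big_seq1.
Qed.

Lemma widen_triples (V : zmodType) N K (A : pred (nat * nat * nat)) (F : nat * nat * nat -> V) :
  N <= K -> (forall p, A p -> p.1.1 * p.2 <= N) ->
  (\sum_(p <- triples N | A p) F p = \sum_(p <- triples K | A p) F p)%R.
Proof.
move=> NK HA; rewrite -big_filter -[RHS]big_filter; apply: perm_big; apply: uniq_perm;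
  rewrite ?filter_uniq ?uniq_triples // => p.
rewrite !mem_filter !mem_triplesP; case Ap: (A p) => //=.
have := HA p Ap; case: p {Ap} => [[x y] z] /= h.
apply/idP/idP => /and3P[/andP[x0 xN] /andP[z0 zN] yz]; rewrite x0 z0 yz /= andbT.
  by rewrite (leq_trans xN) ?(leq_trans zN).
by rewrite (leq_trans (leq_pmulr x z0) h) (leq_trans (leq_pmull z x0) h).
Qed.

Definition sc d (p : nat * nat * nat) := (d * p.1.1, d * p.1.2, d * p.2).
Definition dvd3 d (p : nat * nat * nat) := [&& d %| p.1.1, d %| p.1.2 & d %| p.2].

Lemma sc_inj d : 0 < d -> injective (sc d).
Proof.
move=> d0 [[x y] z] [[x' y'] z'] [] /eqP + /eqP + /eqP.
by rewrite !eqn_pmul2l // => /eqP -> /eqP -> /eqP ->.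
Qed.


Lemma scale_sum (V : zmodType) K d (A : pred (nat * nat * nat)) (F : nat * nat * nat -> V) :
  0 < d -> (forall p, A p -> p.1.1 * p.2 <= K) ->
  (\sum_(p <- triples K | A p && dvd3 d p) F p =
   \sum_(p <- triples K | A (sc d p)) F (sc d p))%R.
Proof.
move=> d0 HA; rewrite -(big_map (sc d) A F) -[LHS]big_filter -[RHS]big_filter.
apply: perm_big; apply: uniq_perm.
- by rewrite filter_uniq ?uniq_triples.
- by rewrite filter_uniq // map_inj_uniq ?uniq_triples //; apply: sc_inj.
move=> p; rewrite !mem_filter; case Ap: (A p) => //=.
have := HA p Ap; case: p {Ap} => [[x y] z] /= h.
apply/idP/idP.
  rewrite /dvd3 /= mem_triples => /andP[/and3P[/dvdnP[a ->] /dvdnP[b ->] /dvdnP[c ->]]].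
  move=> /and3P[/andP[ad aK] /andP[cd cK] bc].
  apply/mapP; exists (a, b, c); last by rewrite /sc /= ![d * _]mulnC.
  move: ad cd; rewrite !muln_gt0 d0 !andbT => a0 c0.
  rewrite mem_triples a0 c0 -(ltn_pmul2r d0) bc /= andbT.
  by rewrite (leq_trans _ aK) ?(leq_trans _ cK) // leq_pmulr.
move=> /mapP[[[a b] c] + [ex ey ez]]; subst x y z; rewrite mem_triples /dvd3 /= !dvdn_mulr //=.
move=> /and3P[/andP[a0 aK] /andP[c0 cK] bc]; rewrite mem_triples.
move: h; rewrite /sc /= => h.
have da0 : 0 < d * a by rewrite muln_gt0 d0.
have dc0 : 0 < d * c by rewrite muln_gt0 d0.
rewrite da0 dc0 ltn_pmul2l // bc /= andbT.
by rewrite (leq_trans (leq_pmulr _ dc0) h) (leq_trans (leq_pmull _ da0) h).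
Qed.

Lemma gcd3_sc d x y z : gcd3 (d * x) (d * y) (d * z) = d * gcd3 x y z.
Proof. by rewrite /gcd3 !muln_gcdr. Qed.

Lemma gcd3_dvd x y z : [&& gcd3 x y z %| x, gcd3 x y z %| y & gcd3 x y z %| z].
Proof.
rewrite /gcd3 dvdn_gcdr andbT.
by rewrite !(dvdn_trans (dvdn_gcdl (gcdn x y) z)) ?dvdn_gcdl ?dvdn_gcdr.
Qed.

Lemma gcd3_gt0 x y z : 0 < x -> 0 < gcd3 x y z.
Proof. by move=> x0; rewrite /gcd3 !gcdn_gt0 x0. Qed.

Lemma gcd_decomp (V : zmodType) K L n (Q : pred (nat * nat * nat)) (F : nat * nat * nat -> V) :
  0 < n -> n <= K -> n <= L ->
  (\sum_(p <- triples K | (p.1.1 * p.2 == n) && Q p) F p =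
   \sum_(1 <= d < L.+1 | (d ^ 2 %| n)%N)
     \sum_(p <- triples K | [&& p.1.1 * p.2 == n %/ d ^ 2,
                               gcd3 p.1.1 p.1.2 p.2 == 1 & Q (sc d p)]%N) F (sc d p))%R.
Proof.
move=> n0 nK nL.
rewrite (eq_bigr (fun p => \sum_(1 <= d < L.+1 | gcd3 p.1.1 p.1.2 p.2 == d) F p)%R); last first.
  case=> [[x y] z] /andP[/eqP /= xz _]; rewrite sum_pred1_nat //.
  have x0 : 0 < x by move: n0; rewrite -xz muln_gt0 => /andP[].
  have z0 : 0 < z by move: n0; rewrite -xz muln_gt0 => /andP[].
  rewrite gcd3_gt0 //= (leq_trans _ nL) // -xz (leq_trans _ (leq_pmulr _ z0)) //.
  by apply: dvdn_leq => //; case/and3P: (gcd3_dvd x y z).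
under eq_bigr do rewrite big_mkcond.
rewrite exchange_big /= [RHS]big_mkcond; apply: eq_big_nat => d /andP[d1 _].
rewrite -big_mkcondr /=; case: ifP => dn; last first.
  apply: big1 => -[[x y] z] /andP[/andP[/eqP /= xz _] /eqP g].
  case/and3P: (gcd3_dvd x y z); rewrite g => dx _ dz.
  by move: dn; rewrite -xz expnS expn1 dvdn_mul.
rewrite (eq_bigl (fun p => [&& p.1.1 * p.2 == n, Q p & gcd3 p.1.1 p.1.2 p.2 == d] && dvd3 d p)); last first.
  case=> [[x y] z] /=; rewrite -andbA; case: eqP => //= _; case: (Q _) => //=.
  by case: eqP => //= <-; rewrite /dvd3 /=; case/and3P: (gcd3_dvd x y z) => -> -> ->.
rewrite scale_sum //; last by move=> p /andP[/eqP -> _].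
apply: eq_bigl => -[[x y] z]; rewrite /sc /= gcd3_sc.
case/dvdnP: dn => k ->; rewrite mulnK ?expn_gt0 ?d1 //.
have -> : d * x * (d * z) = x * z * d ^ 2 by ring.
rewrite eqn_pmul2r ?expn_gt0 ?d1 //.
have -> : (d * gcd3 x y z == d) = (gcd3 x y z == 1) by rewrite -{2}(muln1 d) eqn_pmul2l.
by case: (_ == _); case: (Q _); case: (_ == _).
Qed.
Local Open Scope ring_scope.
Set Implicit Arguments. Unset Strict Implicit.

Lemma toCM (R : realType) (a b : R) : toC (a * b) = toC a * toC b.
Proof. exact: (rmorphM (real_complex R)). Qed.
Lemma toCD (R : realType) (a b : R) : toC (a + b) = toC a + toC b.
Proof. exact: (rmorphD (real_complex R)). Qed.
Lemma toC0 (R : realType) : toC (0 : R) = 0.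
Proof. exact: (rmorph0 (real_complex R)). Qed.
Lemma toCn (R : realType) n : toC (n%:R : R) = n%:R.
Proof. exact: (rmorph_nat (real_complex R)). Qed.
Lemma toC_eq0 (R : realType) (a : R) : (toC a == 0) = (a == 0).
Proof. by rewrite -(toC0 R); apply/eqP/eqP => [[]|->]. Qed.

Lemma mx22E (R : realType) (a b c d : R) :
  [/\ mx22 a b c d 0 0 = a, mx22 a b c d 0 1 = b, mx22 a b c d 1 0 = c
    & mx22 a b c d 1 1 = d].
Proof. by rewrite /mx22 !mxE. Qed.

Lemma mobius_h (R : realType) (a b c : R) t :
  mobius (mx22 a b 0 c) t = (toC a * t + toC b) / toC c.
Proof.
case: (mx22E a b 0 c) => e1 e2 e3 e4.
by rewrite /mobius e1 e2 e3 e4 toC0 mul0r add0r.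
Qed.

Lemma mobius_sh (R : realType) (s a b c : R) t : s != 0 ->
  mobius (s *: mx22 a b 0 c) t = (toC a * t + toC b) / toC c.
Proof.
move=> s0; case: (mx22E a b 0 c) => e1 e2 e3 e4.
rewrite /mobius !mxE /= mulr0 toC0 mul0r add0r !toCM.
have S0 : toC s != 0 by rewrite toC_eq0.
by rewrite -mulrA -mulrDr invfM mulrACA mulfV // mul1r.
Qed.

Lemma ev_sc (R : realType) (f : R[i] -> R[i]) t d p : (0 < d)%N ->
  evxyz f t (sc d p) = evxyz f t p.
Proof.
move=> d0; rewrite /evxyz /sc /=; congr f.
rewrite !natrM !toCM.
have S0 : toC (d%:R : R) != 0 by rewrite toC_eq0 pnatr_eq0 -lt0n.
by rewrite -mulrA -mulrDr invfM mulrACA mulfV // mul1r.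
Qed.

Lemma no_sqrt2 a b : (a ^ 2 = 2 * b ^ 2)%N -> a = 0%N.
Proof.
move=> E; case: (posnP b) => [b0|b0].
  by move: E; rewrite b0 muln0 => /eqP; rewrite expn_eq0 => /andP[/eqP].
have a0 : (0 < a)%N.
  rewrite lt0n; apply/eqP => a0; subst a; move: E; rewrite !expnS !expn0; nia.
have l2 : logn 2 2 = 1%N by [].
have := congr1 (logn 2) E; rewrite lognM ?expn_gt0 ?b0 // !lognX l2; lia.
Qed.

Definition Sm (R : realType) (f : R[i] -> R[i]) t K n (Q : pred (nat * nat * nat)) : R[i] :=
  \sum_(p <- triples K | (p.1.1 * p.2 == n)%N && Q p) evxyz f t p.

Lemma eq_bigl_triples (V : zmodType) K (P Q : pred (nat * nat * nat)) (F : nat * nat * nat -> V) :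
  (forall x y z, (y < z)%N -> P (x, y, z) = Q (x, y, z)) ->
  \sum_(p <- triples K | P p) F p = \sum_(p <- triples K | Q p) F p.
Proof.
move=> H; rewrite big_seq_cond [RHS]big_seq_cond; apply: eq_bigl => -[[x y] z].
by rewrite mem_triples; case: (y < z)%N / idP => [/H -> | ]; rewrite ?andbF ?andbT.
Qed.

Definition hmx (R : realType) (p : nat * nat * nat) : 'M[R]_2 :=
  mx22 (p.1.1)%:R (p.1.2)%:R 0 (p.2)%:R.

Lemma hmx_inj (R : realType) (s : R) : s != 0 -> injective (fun p => s *: hmx R p).
Proof.
move=> s0 [[x y] z] [[x' y'] z'] E.
have := congr1 (fun M : 'M[R]_2 => (M 0 0, M 0 1, M 1 1)) E; rewrite !mxE /=.
by case=> /(mulfI s0)/eqP + /(mulfI s0)/eqP + /(mulfI s0)/eqP; rewrite !eqr_nat => /eqP-> /eqP-> /eqP->.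
Qed.

Lemma sqrt2V2 (R : realType) : ((Num.sqrt (2 : R))^-1) ^+ 2 = 2^-1.
Proof. by rewrite exprVn sqr_sqrtr // ler0n. Qed.

Lemma sqrt2V_neq0 (R : realType) : (Num.sqrt (2 : R))^-1 != 0.
Proof. by rewrite invr_eq0 gt_eqF // sqrtr_gt0 ltr0n. Qed.

Lemma Top_eq (R : realType) (f : R[i] -> R[i]) t n K : (2 * n <= K)%N ->
  Top n f t = Sm f t K n (fun p => (gcd3 p.1.1 p.1.2 p.2 == 1%N) && (odd p.1.1 || odd p.2))
            + Sm f t K (2 * n)%N (fun p => [&& gcd3 p.1.1 p.1.2 p.2 == 1%N, ~~ odd p.1.1 & ~~ odd p.2]).
Proof.
move=> nK.
pose s := (Num.sqrt (2 : R))^-1.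
have s0 : s != 0 := sqrt2V_neq0 R.
have hinj : injective (@hmx R).
  by move=> p q E; apply: (hmx_inj (oner_neq0 R)); rewrite /= !scale1r.
pose C1 := fun p : nat * nat * nat =>
  [&& p.1.1 * p.2 == n, p.1.2 < p.2, gcd3 p.1.1 p.1.2 p.2 == 1 & odd p.1.1 || odd p.2]%N.
pose C2 := fun p : nat * nat * nat =>
  [&& p.1.1 * p.2 == 2 * n, p.1.2 < p.2, gcd3 p.1.1 p.1.2 p.2 == 1,
         ~~ odd p.1.1 & ~~ odd p.2]%N.
have e : perm_eq (Mset R n)
   ([seq hmx R p | p <- triples n & C1 p] ++ [seq s *: hmx R p | p <- triples (2 * n) & C2 p]).
  apply: uniq_perm; first exact: undup_uniq.
    rewrite cat_uniq map_inj_uniq // filter_uniq ?uniq_triples //=.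
    rewrite map_inj_uniq; last exact: hmx_inj.
    rewrite filter_uniq ?uniq_triples // andbT.
    apply/hasPn => M /mapP[q]; rewrite mem_filter => /andP[Cq qT] ->.
    apply/negP => /mapP[p]; rewrite mem_filter => /andP[Cp pT] E.
    have := congr1 (fun M : 'M[R]_2 => M 0 0) E; rewrite !mxE /= => E0.
    have : ((2 * p.1.1 ^ 2)%N%:R : R) = (q.1.1 ^ 2)%N%:R.
      rewrite natrM !natrX -E0 exprMn sqrt2V2 mulrA mulfV ?mul1r //.
      by rewrite pnatr_eq0.
    move/eqP; rewrite eqr_nat => /eqP/esym/no_sqrt2 q0.
    by move: qT; rewrite mem_triplesP q0.
  move=> M; rewrite mem_undup !mem_cat orbA; congr orb.
  rewrite -mem_cat -map_cat; apply: eq_mem_map => p; rewrite mem_cat !mem_filter /C1.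
  by case: (p.1.1 * p.2 == n)%N; case: (p.1.2 < p.2)%N; case: (gcd3 _ _ _ == 1)%N;
    case: (odd p.1.1); case: (odd p.2); case: (p \in triples n).
rewrite /Top (perm_big _ e) big_cat !big_map /= !big_filter.
rewrite (eq_bigr (fun p => evxyz f t p)); last by move=> p _; rewrite mobius_h.
rewrite [X in _ + X = _](eq_bigr (fun p => evxyz f t p)); last by move=> p _; rewrite mobius_sh.
rewrite /Sm (@widen_triples _ n K) ?(@widen_triples _ (2 * n) K) //; first last.
- by move=> p /andP[/eqP -> _].
- by rewrite (leq_trans _ nK) // leq_pmull.
- by move=> p /andP[/eqP -> _].
by congr (_ + _); apply: eq_bigl_triples => x y z yz; rewrite /C1 /C2 /= yz.
Qed.




Lemma Ttilde_eq (R : realType) (f : R[i] -> R[i]) t n K : (2 * n <= K)%N ->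
  Ttilde n f t = Sm f t K n predT +
    (if odd n then 0 else Sm f t K (2 * n)%N (fun p => ~~ odd p.1.1 && ~~ odd p.2)).
Proof.
move=> nK; rewrite /Ttilde /Sm (@widen_triples _ n K); first last.
- by move=> p /eqP ->.
- by rewrite (leq_trans _ nK) // leq_pmull.
rewrite [in RHS](eq_bigl (fun p => p.1.1 * p.2 == n)%N); last by move=> p; rewrite andbT.
case: (odd n) => //; congr (_ + _).
by rewrite (@widen_triples _ (2 * n) K) //; move=> p /andP[/eqP -> _].
Qed.

Lemma Sm_ext (R : realType) (f : R[i] -> R[i]) t K n (Q Q' : pred (nat * nat * nat)) :
  (forall p, Q p = Q' p) -> Sm f t K n Q = Sm f t K n Q'.
Proof. by move=> H; apply: eq_bigl => p; rewrite H. Qed.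

Lemma Sm_split (R : realType) (f : R[i] -> R[i]) t K n (Q P : pred (nat * nat * nat)) :
  Sm f t K n Q = Sm f t K n (fun p => Q p && P p) + Sm f t K n (fun p => Q p && ~~ P p).
Proof.
rewrite /Sm (bigID P) /=; congr (_ + _); apply: eq_bigl => p; by rewrite andbA.
Qed.

Lemma odd_gcd3 x y z : odd (gcd3 x y z) = ~~ dvd3 2 (x, y, z).
Proof. by rewrite /gcd3 /dvd3 /= -[odd _]negbK -dvdn2 !dvdn_gcd andbA. Qed.

Lemma Sm_dvd2 (R : realType) (f : R[i] -> R[i]) t K n : (n <= K)%N ->
  Sm f t K n (dvd3 2) = if (4 %| n)%N then Sm f t K (n %/ 4)%N predT else 0.
Proof.
move=> nK; rewrite /Sm.
rewrite (@scale_sum _ K 2 (fun p => p.1.1 * p.2 == n)%N) //; last by move=> p /eqP ->.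
under eq_bigr do rewrite ev_sc //.
case: ifP => [/dvdnP[k ->] | n4].
  rewrite mulnK //; apply: eq_bigl => -[[x y] z] /=; rewrite andbT.
  have e : (2 * x * (2 * z) = x * z * 4)%N by ring.
  by rewrite e eqn_pmul2r.
apply: big1 => -[[x y] z] /= /eqP E; move: n4; rewrite -E.
have e : (2 * x * (2 * z) = x * z * 4)%N by ring.
by rewrite e dvdn_mull.
Qed.

Definition Epred (p : nat * nat * nat) := [&& gcd3 p.1.1 p.1.2 p.2 == 1%N, ~~ odd p.1.1 & ~~ odd p.2].

Lemma E_zero (R : realType) (f : R[i] -> R[i]) t K n : ~~ (4 %| n)%N -> Sm f t K n Epred = 0.
Proof.
move=> n4; apply: big1 => -[[x y] z]; rewrite /Epred /= => /and4P[/eqP E _].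
rewrite -!dvdn2 => /dvdnP[a ea] /dvdnP[c ec]; move: n4; rewrite -E ea ec.
have e : (a * 2 * (c * 2) = a * c * 4)%N by ring.
by rewrite e dvdn_mull.
Qed.

Lemma Aodd (R : realType) (f : R[i] -> R[i]) t K m k :
  (0 < k)%N -> (k <= m)%N -> (k <= K)%N ->
  Sm f t K k (fun p => odd (gcd3 p.1.1 p.1.2 p.2)) =
  \sum_(1 <= r < m.+1 | odd r && (r ^ 2 %| k)%N)
     Sm f t K (k %/ r ^ 2)%N (fun p => gcd3 p.1.1 p.1.2 p.2 == 1%N).
Proof.
move=> k0 km kK; rewrite /Sm (@gcd_decomp _ K m k) //.
rewrite big_mkcond [RHS]big_mkcond; apply: eq_big_nat => d /andP[d1 _] /=.
case: (d ^ 2 %| k)%N; rewrite ?andbF ?andbT //.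
case: ifP => od.
  under eq_bigr do rewrite ev_sc //.
  apply: eq_bigl => -[[x y] z]; rewrite /sc /= gcd3_sc oddM od /=.
  by case: (gcd3 x y z == 1)%N / eqP => [->|]; rewrite ?andbT ?andbF.
apply: big1 => -[[x y] z]; rewrite /sc /= gcd3_sc oddM od /=.
by rewrite !andbF.
Qed.

Lemma odd_sq_dvd2 r k : odd r -> (r ^ 2 %| 2 * k)%N = (r ^ 2 %| k)%N.
Proof. by move=> or; rewrite Gauss_dvdr // coprimeXl // coprimen2. Qed.

Lemma Bodd (R : realType) (f : R[i] -> R[i]) t m k :
  (0 < k)%N -> (k <= m)%N ->
  Sm f t (2 * m)%N (2 * k)%N (fun p => [&& ~~ odd p.1.1, ~~ odd p.2 & odd (gcd3 p.1.1 p.1.2 p.2)]) =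
  \sum_(1 <= r < m.+1 | odd r && (r ^ 2 %| k)%N)
     Sm f t (2 * m)%N (2 * k %/ r ^ 2)%N Epred.
Proof.
move=> k0 km.
have kK : (2 * k <= 2 * m)%N by rewrite leq_mul2l km orbT.
rewrite /Sm (@gcd_decomp _ (2 * m) (2 * m) (2 * k)) // ?muln_gt0 //.
rewrite big_mkcond [RHS]big_mkcond.
rewrite (@big_cat_nat _ _ _ m.+1) //= ?ltnS ?leq_pmull //.
rewrite [X in _ + X]big1_seq ?addr0; last first.
  move=> d; rewrite mem_index_iota => /andP[_ /andP[md _]].
  case: ifP => // dk; apply: big1 => -[[x y] z]; rewrite /sc /= gcd3_sc !oddM.
  case: (boolP (odd d)) => od; last by rewrite /= !andbF.
  move: dk; rewrite odd_sq_dvd2 // => /(dvdn_leq k0) dk.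
  have d0 : (0 < d)%N := leq_ltn_trans (leq0n m) md.
  have h : (d <= d ^ 2)%N by rewrite expnS expn1 leq_pmulr.
  by have := leq_trans (leq_trans h dk) km; rewrite leqNgt md.
apply: eq_big_nat => d /andP[d1 _] /=.
case: (boolP (odd d)) => od /=.
  rewrite odd_sq_dvd2 //; case: (d ^ 2 %| k)%N => //.
  under eq_bigr do rewrite ev_sc //.
  apply: eq_bigl => -[[x y] z]; rewrite /sc /Epred /= gcd3_sc !oddM od /=.
  by case: (gcd3 x y z == 1)%N / eqP => [->|]; rewrite ?andbT ?andbF.
case: ifP => // _; apply: big1 => -[[x y] z]; rewrite /sc /= gcd3_sc !oddM (negbTE od) /=.
by rewrite ?andbF.
Qed.

Lemma Aall_split (R : realType) (f : R[i] -> R[i]) t K k : (k <= K)%N ->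
  Sm f t K k predT = Sm f t K k (fun p => odd (gcd3 p.1.1 p.1.2 p.2)) +
    (if (4 %| k)%N then Sm f t K (k %/ 4)%N predT else 0).
Proof.
move=> kK; rewrite (Sm_split _ _ _ _ _ (fun p => odd (gcd3 p.1.1 p.1.2 p.2))).
rewrite -Sm_dvd2 //; congr (_ + _); apply: Sm_ext => -[[x y] z] //=.
by rewrite odd_gcd3 negbK.
Qed.

Lemma Bev_split (R : realType) (f : R[i] -> R[i]) t K k : (k <= K)%N ->
  Sm f t K k (fun p => ~~ odd p.1.1 && ~~ odd p.2) =
  Sm f t K k (fun p => [&& ~~ odd p.1.1, ~~ odd p.2 & odd (gcd3 p.1.1 p.1.2 p.2)]) +
    (if (4 %| k)%N then Sm f t K (k %/ 4)%N predT else 0).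
Proof.
move=> kK; rewrite (Sm_split _ _ _ _ _ (fun p => odd (gcd3 p.1.1 p.1.2 p.2))).
rewrite -Sm_dvd2 //; congr (_ + _); apply: Sm_ext => -[[x y] z] /=.
  by rewrite andbA.
rewrite odd_gcd3 negbK /dvd3 /= !dvdn2.
by case: (odd x); case: (odd y); case: (odd z).
Qed.

Lemma P_split (R : realType) (f : R[i] -> R[i]) t K k :
  Sm f t K k (fun p => gcd3 p.1.1 p.1.2 p.2 == 1%N) =
  Sm f t K k (fun p => (gcd3 p.1.1 p.1.2 p.2 == 1%N) && (odd p.1.1 || odd p.2)) +
  Sm f t K k Epred.
Proof.
rewrite (Sm_split _ _ _ _ _ (fun p => odd p.1.1 || odd p.2)); congr (_ + _).
by apply: Sm_ext => p; rewrite /Epred negb_or.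
Qed.

Lemma odd_div n d : odd n -> (d %| n)%N -> odd (n %/ d)%N.
Proof.
move=> on /divnK E; have : odd (n %/ d * d)%N by rewrite E.
by rewrite oddM => /andP[].
Qed.

Lemma not4_odd k : odd k -> ~~ (4 %| k)%N.
Proof.
move=> ok; apply/negP => /(dvdn_trans (isT : (2 %| 4)%N)); by rewrite dvdn2 ok.
Qed.

Lemma not4_2odd k : odd k -> ~~ (4 %| 2 * k)%N.
Proof. by move=> ok; rewrite (_ : 4 = 2 * 2)%N // dvdn_pmul2l // dvdn2 ok. Qed.

Lemma Top_split (R : realType) (f : R[i] -> R[i]) t m k : (k <= m)%N ->
  Top k f t = Sm f t (2 * m)%N k (fun p => (gcd3 p.1.1 p.1.2 p.2 == 1%N) && (odd p.1.1 || odd p.2))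
            + Sm f t (2 * m)%N (2 * k)%N Epred.
Proof. by move=> km; rewrite (@Top_eq _ f t k (2 * m)) // leq_mul2l km orbT. Qed.

Lemma main_ind (R : realType) (f : R[i] -> R[i]) t m a b : odd b -> (2 ^ a * b <= m)%N ->
  Ttilde (2 ^ a * b)%N f t =
  \sum_(1 <= r < m.+1 | odd r && (r ^ 2 %| 2 ^ a * b)%N)
      \sum_(0 <= i < a.+1) Top (2 ^ a * b %/ (r ^ 2 * 2 ^ i))%N f t.
Proof.
move=> ob; have b0 : (0 < b)%N by case: (b) ob.
elim: a => [|a IH] bm.
  rewrite expn0 mul1n in bm *.
  rewrite (@Ttilde_eq _ f t b (2 * m)%N) ?leq_mul2l ?bm ?orbT // ob addr0.
  rewrite Aall_split ?(leq_trans bm) ?leq_pmull // (negbTE (not4_odd ob)) addr0.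
  rewrite (@Aodd _ f t (2 * m)%N m b) // ?(leq_trans bm) ?leq_pmull //.
  apply: eq_bigr => r /andP[or rb]; rewrite big_nat1 expn0 muln1.
  have ok : odd (b %/ r ^ 2)%N := odd_div ob rb.
  have km : (b %/ r ^ 2 <= m)%N := leq_trans (leq_div _ _) bm.
  by rewrite P_split (Top_split f t km) (E_zero f t _ (not4_odd ok)) (E_zero f t _ (not4_2odd ok)).
have e : (2 ^ a.+1 * b = 2 * (2 ^ a * b))%N by rewrite expnS mulnA.
rewrite e in bm *; move: IH; set n := (2 ^ a * b)%N => IH.
have n0 : (0 < n)%N by rewrite muln_gt0 expn_gt0 b0.
have nm : (n <= m)%N by rewrite (leq_trans _ bm) // leq_pmull.
have {}IH := IH nm.
have n2m : (2 * n <= 2 * m)%N by rewrite leq_mul2l nm orbT.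
have n22m : (2 * (2 * n) <= 2 * m)%N by rewrite leq_mul2l bm orbT.
rewrite (eq_bigl (fun r => odd r && (r ^ 2 %| n)%N)); last first.
  by move=> r; case: (boolP (odd r)) => //= or; rewrite odd_sq_dvd2.
rewrite (eq_bigr (fun r => Top (2 * n %/ r ^ 2)%N f t +
            \sum_(0 <= i < a.+1) Top (n %/ (r ^ 2 * 2 ^ i))%N f t)); last first.
  move=> r _; rewrite big_nat_recl // expn0 muln1; congr (_ + _).
  by apply: eq_bigr => i _; rewrite [(2 ^ i.+1)%N]expnS [(r ^ 2 * _)%N]mulnCA divnMl.
rewrite big_split /= -IH.
rewrite (@Ttilde_eq _ f t (2 * n)%N (2 * m)%N) // (@Ttilde_eq _ f t n (2 * m)%N) //.
rewrite oddM /=.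
rewrite (@Aall_split _ f t (2 * m)%N (2 * n)%N) //.
rewrite (@Bev_split _ f t (2 * m)%N (2 * (2 * n)%N)%N) //.
rewrite (@Bev_split _ f t (2 * m)%N (2 * n)%N) //.
have -> : (4 %| 2 * (2 * n))%N by rewrite mulnA dvdn_mulr.
have -> : (2 * (2 * n) %/ 4 = n)%N by rewrite mulnA mulKn.
have n20 : (0 < 2 * n)%N by rewrite muln_gt0 n0.
have n2K : (2 * n <= 2 * m)%N by rewrite (leq_trans bm) // leq_pmull.
rewrite (Aodd f t n20 bm n2K) (Bodd f t n20 bm) (Bodd f t n0 nm).
rewrite (eq_bigl (fun r => odd r && (r ^ 2 %| n)%N)); last first.
  by move=> r; case: (boolP (odd r)) => //= or; rewrite odd_sq_dvd2.
rewrite (eq_bigl (fun r => odd r && (r ^ 2 %| n)%N) (fun r => Sm f t (2 * m)%N (2 * (2 * n)%N %/ r ^ 2)%N Epred)); last first.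
  by move=> r; case: (boolP (odd r)) => //= or; rewrite odd_sq_dvd2.
have Fsum : forall F : nat -> R[i],
  \sum_(1 <= r < m.+1 | odd r && (r ^ 2 %| 2 * n)%N) F r =
  \sum_(1 <= r < m.+1 | odd r && (r ^ 2 %| n)%N) F r.
  by move=> F; apply: eq_bigl => r; case: (boolP (odd r)) => //= or; rewrite odd_sq_dvd2.
rewrite Fsum.
under [X in X + _ + _ = _]eq_bigr do rewrite P_split.
under [X in _ = X + _]eq_bigr => r _ do rewrite (Top_split f t (leq_trans (leq_div _ _) bm)).
rewrite (eq_bigr (fun r => Sm f t (2 * m)%N (2 * ((2 * n) %/ r ^ 2))%N Epred)
   (P := fun r => odd r && (r ^ 2 %| n)%N)); last first.
  by move=> r /andP[or rn]; rewrite muln_divA // dvdn_mull.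
rewrite !big_split /=.
rewrite -/n.
have SE1z : odd n -> \sum_(1 <= r < m.+1 | odd r && (r ^ 2 %| n)%N)
        Sm f t (2 * m)%N ((2 * n) %/ r ^ 2)%N Epred = 0.
  move=> on; apply: big1 => r /andP[or rn]; rewrite -muln_divA //.
  exact/E_zero/not4_2odd/odd_div.
case: (boolP (odd n)) => on.
  rewrite (negbTE (not4_2odd on)) (SE1z on); ring.
ring.
Qed.

Unset Implicit Arguments.

Theorem proposition2p10 (R : realType) (alpha beta : nat) (f : R[i] -> R[i]) :
  odd beta -> G2p_invariant f ->
  forall t : R[i], upper t ->
    Ttilde (2 ^ alpha * beta)%N f t =
    \sum_(1 <= r < (2 ^ alpha * beta).+1 | odd r && (r ^ 2 %| 2 ^ alpha * beta)%N)
      \sum_(0 <= i < alpha.+1) Top (2 ^ alpha * beta %/ (r ^ 2 * 2 ^ i))%N f t.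
Proof.
move=> ob _ t _.
exact: (main_ind f t ob (leqnn _)).
Qed.
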